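(* In the Setting below, $N_{\mathcal M}$ is a subalgebra of $\mathcal M$ (i.e. $N_{\mathcal M}N_{\mathcal M}\subseteq N_{\mathcal M}$) and $N_{\mathcal M}J_{\mathcal M}\subseteq J_{\mathcal M}$.
   Context: Setting. Let $\mathbb F$ be a field of characteristic different from $2$ and $3$. A Malcev algebra is an anticommutative algebra $\mathcal M$ over $\mathbb F$ satisfying $(xz)(yt)=((xy)z)t+((yz)t)x+((zt)x)y+((tx)y)z$. Products are left-normed: $xyz=(xy)z$, $xyzt=((xy)z)t$. Put $J(x,y,z)=xyz+yzx+zxy$ (the Jacobian), $\{x,y,z\}=xyz-xzy+2x(yz)$, and $h(y,z,t,x,u)=\{yz,t,u\}x+\{yz,t,x\}u+\{yx,z,u\}t+\{yu,z,x\}t$. The variety $\mathcal H$ consists of the Malcev algebras satisfying $h(y,z,t,x,u)=0$ identically. The centroid $\Gamma(\mathcal M)$ is the set of linear maps $\alpha$ of $\mathcal M$ (written on the right) with $(xy)\alpha=x(y\alpha)=(x\alpha)y$ for all $x,y$. Put $p(x,y,z,t)=-\{zt,x,y\}-\{yt,z,x\}+\{xt,y,z\}$ and define the operator $\alpha(y,z,t)$ by $x\,\alpha(y,z,t)=p(x,y,z,t)$; for $\mathcal M\in\mathcal H$ these operators lie in $\Gamma(\mathcal M)$. Let $L=\mathfrak{sl}_2(\mathbb F)$ with basis $E,H,F$ and products $EH=E$, $FH=-F$, $EF=\tfrac12 H$. Standing assumption: $\mathcal M\in\mathcal H$ contains $L$ as a subalgebra and $mL\neq 0$ for every $0\neq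 m\in\mathcal M$. Define $N_{\mathcal M}=\{m\in\mathcal M: J(m,a,b)=0\ \forall a,b\in L\}$ and $J_{\mathcal M}=\{m\in\mathcal M:\{m,a,b\}=0\ \forall a,b\in L\}$. Known facts (from prior work): $\mathcal M=N_{\mathcal M}\oplus J_{\mathcal M}$; $J_{\mathcal M}$ is a direct sum of $L$-submodules $V_{2i}$, each with a basis $\{u_i,v_i\}$ satisfying $u_iH=u_i$, $v_iH=-v_i$, $u_iE=v_i$, $u_iF=0$, $v_iE=0$, $v_iF=-u_i$; and, letting $U$ be the linear span of the operators $\alpha(m,a,b)$ ($m\in\mathcal M$, $a,b\in L$), $U\subseteq\Gamma(\mathcal M)$ and $N_{\mathcal M}=\sum_{\alpha\in U}L\alpha$. *)

(* Defs.v *)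
From Stdlib Require List.
From mathcomp Require Import all_boot all_order all_algebra.
Set Implicit Arguments. Unset Strict Implicit. Unset Printing Implicit Defensive.
Import GRing.Theory.
Local Open Scope ring_scope.

(* An algebra over the field K: an K-vector space M with a product mul.
   Products are left-normed as in the paper. *)
Section MalcevDefs.
Variables (K : fieldType) (M : lmodType K) (mul : M -> M -> M).
Local Notation "x ** y" := (mul x y) (at level 40, left associativity).

Definition bilinear_prod : Prop :=
  (forall (c : K) x y z, (c *: x + y) ** z = c *: (x ** z) + y ** z) /\
  (forall (c : K) x y z, z ** (c *: x + y) = c *: (z ** x) + z ** y).

Definition anticommutative : Prop := forall x y, x ** y = - (y ** x).

Definition malcev_identity : Prop := forall x y z t,
  (x ** z) ** (y ** t) =
  ((x ** y) ** z) ** t + ((y ** z) ** t) ** x + ((z ** t) ** x) ** y + ((t ** x) ** y) ** z.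

Definition jacobian x y z := (x ** y) ** z + (y ** z) ** x + (z ** x) ** y.

Definition brace x y z := (x ** y) ** z - (x ** z) ** y + (x ** (y ** z)) *+ 2.

Definition hpoly y z t x u :=
  brace (y ** z) t u ** x + brace (y ** z) t x ** u
  + brace (y ** x) z u ** t + brace (y ** u) z x ** t.

Definition in_H_variety : Prop := forall y z t x u, hpoly y z t x u = 0.

(* p(x,y,z,t) = -{zt,x,y} - {yt,z,x} + {xt,y,z};  x alpha(y,z,t) = p(x,y,z,t) *)
Definition ppoly x y z t :=
  - brace (z ** t) x y - brace (y ** t) z x + brace (x ** t) y z.

Definition alpha_op y z t : M -> M := fun x => ppoly x y z t.

Definition in_centroid (a : M -> M) : Prop :=
  (forall (c : K) x y, a (c *: x + y) = c *: a x + a y) /\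
  (forall x y, a (x ** y) = x ** (a y) /\ a (x ** y) = (a x) ** y).

Variables (E H F : M).

Definition inL (a : M) : Prop := exists x y z : K, a = x *: E + y *: H + z *: F.

Definition is_sl2_copy : Prop :=
  E ** H = E /\ F ** H = - F /\ E ** F = 2%:R^-1 *: H /\
  (forall x y z : K, x *: E + y *: H + z *: F = 0 -> [/\ x = 0, y = 0 & z = 0]).

Definition NM (m : M) : Prop := forall a b, inL a -> inL b -> jacobian m a b = 0.
Definition JM (m : M) : Prop := forall a b, inL a -> inL b -> brace m a b = 0.

Definition inU (al : M -> M) : Prop :=
  exists s : seq (K * (M * M * M)),
    (forall q, List.In q s -> inL q.2.1.2 /\ inL q.2.2) /\
    forall x, al x = \sum_(q <- s) q.1 *: alpha_op q.2.1.1 q.2.1.2 q.2.2 x.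

Definition in_sum_L_U (n : M) : Prop :=
  exists s : seq ((M -> M) * M),
    (forall q, List.In q s -> inU q.1 /\ inL q.2) /\
    n = \sum_(q <- s) q.1 q.2.

(* u,v form a basis-type pair of a module V_{2i} as in the paper *)
Definition V2_pair (u v : M) : Prop :=
  u ** H = u /\ v ** H = - v /\ u ** E = v /\ u ** F = 0 /\ v ** E = 0 /\ v ** F = - u.

End MalcevDefs.

(* Main.v *)
Require Import Defs.
From Stdlib Require List.
From mathcomp Require Import all_boot all_order all_algebra.
Import GRing.Theory.
Local Open Scope ring_scope.

Theorem lemmal2 (K : fieldType) (M : lmodType K) (mul : M -> M -> M)
  (E H F : M)
  (hchar2 : (2%:R : K) != 0) (hchar3 : (3%:R : K) != 0)
  (hbil : bilinear_prod mul) (hanti : anticommutative mul)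
  (hmalcev : malcev_identity mul) (hH : in_H_variety mul)
  (hL : is_sl2_copy mul E H F)
  (hfaith : forall m : M, m <> 0 -> exists a, inL E H F a /\ mul m a <> 0)
  (hdec : forall m : M, exists n j,
      NM mul E H F n /\ JM mul E H F j /\ m = n + j)
  (hdir : forall m : M, NM mul E H F m -> JM mul E H F m -> m = 0)
  (hJ : forall j : M, JM mul E H F j ->
      exists s : seq ((K * K) * (M * M)),
        (forall q, List.In q s ->
           [/\ V2_pair mul E H F q.2.1 q.2.2,
               JM mul E H F q.2.1 & JM mul E H F q.2.2]) /\
        j = \sum_(q <- s) (q.1.1 *: q.2.1 + q.1.2 *: q.2.2))
  (hU : forall m a b, inL E H F a -> inL E H F b ->
      in_centroid mul (alpha_op mul m a b))
  (hN : forall n : M, NM mul E H F n <-> in_sum_L_U mul E H F n) :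
  (forall x y, NM mul E H F x -> NM mul E H F y -> NM mul E H F (mul x y)) /\
  (forall x y, NM mul E H F x -> JM mul E H F y -> JM mul E H F (mul x y)).
Proof.
case: hbil => bl br.
have mulDl : forall x y z, mul (x + y) z = mul x z + mul y z.
  by move=> x y z; have := bl 1 x y z; rewrite !scale1r.
have mulDr : forall x y z, mul z (x + y) = mul z x + mul z y.
  by move=> x y z; have := br 1 x y z; rewrite !scale1r.
have mul0l : forall z, mul 0 z = 0.
  by move=> z; have h := mulDl 0 0 z; rewrite addr0 in h; apply: (addrI (mul 0 z)); rewrite -h addr0.
have mul0r : forall z, mul z 0 = 0.
  by move=> z; have h := mulDr 0 0 z; rewrite addr0 in h; apply: (addrI (mul z 0)); rewrite -h addr0.
have mulZl : forall c x z, mul (c *: x) z = c *: mul x z.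
  by move=> c x z; have := bl c x 0 z; rewrite !addr0 mul0l addr0.
have mulZr : forall c x z, mul z (c *: x) = c *: mul z x.
  by move=> c x z; have := br c x 0 z; rewrite !addr0 mul0r addr0.
have mulNl : forall x z, mul (- x) z = - mul x z.
  by move=> x z; rewrite -scaleN1r mulZl scaleN1r.
have mulNr : forall x z, mul z (- x) = - mul z x.
  by move=> x z; rewrite -scaleN1r mulZr scaleN1r.
have mulBl : forall x y z, mul (x - y) z = mul x z - mul y z.
  by move=> x y z; rewrite mulDl mulNl.
have mulBr : forall x y z, mul z (x - y) = mul z x - mul z y.
  by move=> x y z; rewrite mulDr mulNr.
have mulMnl : forall x z n, mul (x *+ n) z = mul x z *+ n.
  by move=> x z; elim=> [|n IH]; rewrite ?mulr0n ?mul0l // !mulrS mulDl IH.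
have mulMnr : forall x z n, mul z (x *+ n) = mul z x *+ n.
  by move=> x z; elim=> [|n IH]; rewrite ?mulr0n ?mul0r // !mulrS mulDr IH.
have mul_suml : forall (I : Type) (s : seq I) (f : I -> M) z,
    mul (\sum_(i <- s) f i) z = \sum_(i <- s) mul (f i) z.
  move=> I s f z; elim: s => [|i s IH]; first by rewrite !big_nil mul0l.
  by rewrite !big_cons mulDl IH.
have mul_sumr : forall (I : Type) (s : seq I) (f : I -> M) z,
    mul z (\sum_(i <- s) f i) = \sum_(i <- s) mul z (f i).
  move=> I s f z; elim: s => [|i s IH]; first by rewrite !big_nil mul0r.
  by rewrite !big_cons mulDr IH.
have mulxx : forall x, mul x x = 0.
  move=> x; have h : mul x x *+ 2 = 0 by rewrite mulr2n {1}hanti addNr.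
  have := congr1 (fun v => (2%:R : K)^-1 *: v) h.
  by rewrite scaler0 -scaler_nat scalerA mulVf // scale1r.
have Lind : forall P : M -> Prop, P 0 -> (forall x y, P x -> P y -> P (x + y)) ->
    (forall c x, P x -> P (c *: x)) -> P E -> P H -> P F ->
    forall a, inL E H F a -> P a.
  move=> P P0 PD PZ PE PH PF a [x [y [z ->]]].
  by apply PD; [apply PD|]; apply PZ.
have inL0 : inL E H F 0 by exists 0, 0, 0; rewrite !scale0r !addr0.
have inLE : inL E H F E by exists 1, 0, 0; rewrite !scale0r !addr0 scale1r.
have inLH : inL E H F H by exists 0, 1, 0; rewrite !scale0r addr0 add0r scale1r.
have inLF : inL E H F F by exists 0, 0, 1; rewrite !scale0r addr0 add0r scale1r.
have inLD : forall x y, inL E H F x -> inL E H F y -> inL E H F (x + y).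
  move=> ? ? [x1 [y1 [z1 ->]]] [x2 [y2 [z2 ->]]].
  exists (x1 + x2), (y1 + y2), (z1 + z2); rewrite !scalerDl.
  by rewrite addrACA [X in X + _]addrACA.
have inLZ : forall c x, inL E H F x -> inL E H F (c *: x).
  move=> c ? [x1 [y1 [z1 ->]]].
  by exists (c * x1), (c * y1), (c * z1); rewrite !scalerDr !scalerA.
have inLN : forall x, inL E H F x -> inL E H F (- x).
  by move=> x hx; rewrite -scaleN1r; apply: (inLZ).
case: hL => hEH [hFH [hEF _]].
have hHE : mul H E = - E by rewrite hanti hEH.
have hHF : mul H F = F by rewrite hanti hFH opprK.
have hFE : mul F E = - ((2%:R : K)^-1 *: H) by rewrite hanti hEF.
have mulL : forall a b, inL E H F a -> inL E H F b -> inL E H F (mul a b).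
{ move=> a b ha hb; move: a ha; apply: (Lind).
  all: try (by rewrite mul0l).
  all: try (by move=> x y hx hy; rewrite mulDl; apply: (inLD)).
  all: try (by move=> c x hx; rewrite mulZl; apply: (inLZ)).
  all: move: b hb; apply: (Lind).
  all: try (by rewrite mul0r).
  all: try (by move=> x y hx hy; rewrite mulDr; apply: (inLD)).
  all: try (by move=> c x hx; rewrite mulZr; apply: (inLZ)).
  all: rewrite ?mulxx ?hEH ?hHE ?hFH ?hHF ?hEF ?hFE.
  all: by repeat first [apply: (inLN) | apply: (inLZ)]. }
have jacD : forall x y b d, jacobian mul (x + y) b d = jacobian mul x b d + jacobian mul y b d.
  move=> x y b d; rewrite /jacobian !mulDl !mulDr !mulDl.
  by rewrite !addrA (ACl (1*3*5*2*4*6)%AC).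
have jacZ : forall c x b d, jacobian mul (c *: x) b d = c *: jacobian mul x b d.
  move=> c x b d; rewrite /jacobian !mulZl !mulZr !mulZl.
  by rewrite !scalerDr.
have braD : forall x y b d, brace mul (x + y) b d = brace mul x b d + brace mul y b d.
  move=> x y b d; rewrite /brace !mulDl mulrnDl opprD.
  by rewrite !addrA (ACl (1*3*5*6*2*4*7*8)%AC).
have braZ : forall c x b d, brace mul (c *: x) b d = c *: brace mul x b d.
  move=> c x b d; rewrite /brace !mulZl.
  by rewrite !scalerDr scalerN mulr2n.
have jac_cyc : forall x y z, jacobian mul x y z = jacobian mul y z x.
  by move=> x y z; rewrite /jacobian -addrA addrC.
have jacL : forall a b d, inL E H F a -> inL E H F b -> inL E H F d -> jacobian mul a b d = 0.
  have lift : forall b d, (forall a, inL E H F a -> jacobian mul a b d = 0) ->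
      forall a, inL E H F a -> jacobian mul a b d = 0 by [].
{ move=> a b d ha hb hd; move: a ha; apply: (Lind).
  all: try (by rewrite /jacobian !(mul0l, mul0r) !addr0).
  all: try (by move=> x y hx hy; rewrite jacD hx hy addr0).
  all: try (by move=> c x hx; rewrite jacZ hx scaler0).
  all: cbv beta; rewrite jac_cyc; move: b hb; apply: (Lind).
  all: try (by rewrite /jacobian !(mul0l, mul0r) !addr0).
  all: try (by move=> x y hx hy; rewrite jacD hx hy addr0).
  all: try (by move=> c x hx; rewrite jacZ hx scaler0).
  all: cbv beta; rewrite jac_cyc; move: d hd; apply: (Lind).
  all: try (by rewrite /jacobian !(mul0l, mul0r) !addr0).
  all: try (by move=> x y hx hy; rewrite jacD hx hy addr0).
  all: try (by move=> c x hx; rewrite jacZ hx scaler0).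
  all: cbv beta; rewrite /jacobian ?mulxx ?hEH ?hHE ?hFH ?hHF ?hEF ?hFE.
  all: rewrite ?mulNl ?mulNr ?mulZl ?mulZr ?mulxx ?mul0l ?mul0r ?hEH ?hHE ?hFH ?hHF ?hEF ?hFE.
  all: rewrite ?mulNl ?mulNr ?mulZl ?mulZr ?mulxx ?mul0l ?mul0r ?scaler0 ?scalerN ?opprK ?oppr0 ?addr0 ?add0r.
  all: by rewrite ?subrr ?addNr. }
have cen_ext : forall f g : M -> M, (forall x, f x = g x) ->
    in_centroid mul g -> in_centroid mul f.
  move=> f g efg [hl hm]; split; first by move=> c x y; rewrite !efg hl.
  by move=> x y; rewrite !efg; apply: hm.
have cen0 : in_centroid mul (fun _ => 0).
  by split; [move=> c x y; rewrite scaler0 addr0 | move=> x y; rewrite mul0r mul0l].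
have cenD : forall f g, in_centroid mul f -> in_centroid mul g ->
    in_centroid mul (fun x => f x + g x).
  move=> f g [fl fm] [gl gm]; split.
    by move=> c x y; rewrite fl gl scalerDr !addrA (ACl (1*3*2*4)%AC).
  move=> x y; have [f1 f2] := fm x y; have [g1 g2] := gm x y.
  by split; [rewrite mulDr -f1 -g1 | rewrite mulDl -f2 -g2].
have cenZ : forall k f, in_centroid mul f -> in_centroid mul (fun x => k *: f x).
  move=> k f [fl fm]; split.
    by move=> c x y; rewrite fl scalerDr !scalerA mulrC.
  move=> x y; have [f1 f2] := fm x y.
  by split; [rewrite mulZr -f1 | rewrite mulZl -f2].
have cenU : forall al, inU mul E H F al -> in_centroid mul al.
  move=> al [s [hs hal]]; apply: (cen_ext _ _ hal).
  elim: s hs {hal} => [|q s IH] hs.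
    by apply: (cen_ext _ _ _ cen0) => x; rewrite big_nil.
  apply: (cen_ext _ _ _ (cenD _ _ (cenZ q.1 _ _) (IH _))).
  - by move=> x; rewrite big_cons.
  - by have [h1 h2] := hs q (or_introl erefl); apply: hU.
  - by move=> r hr; apply: hs; right.
have cenA : forall al, in_centroid mul al ->
    [/\ forall x y, al (x + y) = al x + al y, al 0 = 0,
        forall x, al (- x) = - al x & forall x, al (x *+ 2) = al x *+ 2].
  move=> al [hl _].
  have aD : forall x y, al (x + y) = al x + al y by move=> x y; have := hl 1 x y; rewrite !scale1r.
  have a0 : al 0 = 0.
    by have h := aD 0 0; rewrite addr0 in h; apply: (addrI (al 0)); rewrite -h addr0.
  split => //.
  - by move=> x; have := hl (-1) x 0; rewrite addr0 a0 addr0 !scaleN1r.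
  - by move=> x; rewrite !mulr2n aD.
have cenJ : forall al, in_centroid mul al -> forall w c d,
    jacobian mul (al w) c d = al (jacobian mul w c d).
  move=> al hal w c d; have [aD _ _ _] := cenA al hal; case: hal => _ hm.
  rewrite /jacobian !aD.
  have [m1 m2] := hm w c; rewrite -m2.
  have [m3 m4] := hm (mul w c) d; rewrite -m4.
  have [m5 m6] := hm (mul c d) w; rewrite -m5.
  have [m7 m8] := hm d w; rewrite -m7.
  by have [m9 m10] := hm (mul d w) c; rewrite -m10.
have cenB : forall al, in_centroid mul al -> forall w c d,
    brace mul (al w) c d = al (brace mul w c d).
  move=> al hal w c d; have [aD _ aN aM] := cenA al hal; case: hal => _ hm.
  rewrite /brace !aD aN.
  have [m1 m2] := hm w c; rewrite -m2.
  have [m3 m4] := hm (mul w c) d; rewrite -m4.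
  have [m5 m6] := hm w d; rewrite -m6.
  have [m7 m8] := hm (mul w d) c; rewrite -m8.
  by have [m9 m10] := hm w (mul c d); rewrite -m10.
have NM0 : NM mul E H F 0.
  by move=> a b _ _; rewrite /jacobian !(mul0l, mul0r) !addr0.
have NMsum : forall (I : Type) (r : seq I) (f : I -> M),
    (forall i, List.In i r -> NM mul E H F (f i)) -> NM mul E H F (\sum_(i <- r) f i).
  move=> I r f; elim: r => [|i r IH] hr; first by rewrite big_nil.
  rewrite big_cons => a b ha hb; rewrite jacD (hr i (or_introl erefl)) //.
  by rewrite (IH _ a b ha hb) ?addr0 // => j hj; apply: hr; right.
have JM0 : JM mul E H F 0.
  by move=> a b _ _; rewrite /brace !mul0l subrr mul0rn addr0.
have JMD : forall x y, JM mul E H F x -> JM mul E H F y -> JM mul E H F (x + y).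
  by move=> x y hx hy a b ha hb; rewrite braD hx // hy // addr0.
have JMZ : forall c x, JM mul E H F x -> JM mul E H F (c *: x).
  by move=> c x hx a b ha hb; rewrite braZ hx // scaler0.
have JMN : forall x, JM mul E H F x -> JM mul E H F (- x).
  by move=> x hx; rewrite -scaleN1r; apply: (JMZ).
have JMsum : forall (I : Type) (r : seq I) (f : I -> M),
    (forall i, List.In i r -> JM mul E H F (f i)) -> JM mul E H F (\sum_(i <- r) f i).
  move=> I r f; elim: r => [|i r IH] hr; first by rewrite big_nil.
  rewrite big_cons; apply: (JMD); first by apply: hr; left.
  by apply: IH => j hj; apply: hr; right.
have JLmod : forall a y, inL E H F a -> JM mul E H F y -> JM mul E H F (mul a y).
{ move=> a y ha hy; have [t [ht ->]] := hJ y hy.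
  rewrite mul_sumr; apply: (JMsum) => r hr.
  have [[uH [vH [uE [uF [vE vF]]]]] Ju Jv] := ht r hr.
  rewrite mulDr !mulZr; apply: (JMD); apply: (JMZ); move: a ha; apply: (Lind).
  all: try (by rewrite mul0l).
  all: try (by move=> x1 y1 hx1 hy1; rewrite mulDl; apply: (JMD)).
  all: try (by move=> c x1 hx1; rewrite mulZl; apply: (JMZ)).

  all: cbv beta; rewrite hanti ?uH ?vH ?uE ?uF ?vE ?vF ?opprK ?oppr0.
  all: by repeat first [apply: (JMN) | apply: (JMZ)]. }
split.
  move=> x y hx hy; have [s [hs ->]] := (hN x).1 hx; have [t [ht ->]] := (hN y).1 hy.
  rewrite mul_suml; apply: (NMsum) => q hq; rewrite mul_sumr; apply: (NMsum) => r hr.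
  have [hqU hqL] := hs q hq; have [hrU hrL] := ht r hr.
  have cq := cenU _ hqU; have cr := cenU _ hrU.
  have [_ e1] := (proj2 cq) q.2 (r.1 r.2); rewrite -e1.
  have [e2 _] := (proj2 cr) q.2 r.2; rewrite -e2.
  move=> c d hc hd; rewrite (cenJ _ cq) (cenJ _ cr) jacL //; last by apply: (mulL).
  by have [_ c0 _ _] := cenA _ cr; have [_ q0 _ _] := cenA _ cq; rewrite c0 q0.
move=> x y hx hy; have [s [hs ->]] := (hN x).1 hx.
rewrite mul_suml; apply: (JMsum) => q hq.
have [hqU hqL] := hs q hq; have cq := cenU _ hqU.
have [_ e1] := (proj2 cq) q.2 y; rewrite -e1.
move=> c d hc hd; rewrite (cenB _ cq) JLmod //.
by have [_ q0 _ _] := cenA _ cq.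
Qed.
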